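(* Let $R$ be a commutative unital $\mathbb C$-algebra, $c\in\mathbb C\setminus\{0\}$, and let $\partial$ be the unique $R$-linear derivation of the Laurent polynomial ring $R[\lambda,\lambda^{-1}]$ with $\partial\lambda=c$. Let $m\ge1$ and for $k=1,\dots,m$ define the operator \[ D_k=(-1)^{\frac{k(k+1)}2}\sum_{j=0}^{k-1}\frac{(k-1+j)!}{2^j(k-1-j)!\,j!}\,(-c)^j\,\lambda^{-(k+j)}\,\partial^{\,k-j} \] on $R[\lambda,\lambda^{-1}]$ (apply $\partial^{k-j}$, then multiply by $\lambda^{-(k+j)}$). Let $p=\sum_{j=0}^Na_j\lambda^j\in R[\lambda]$. Then $D_kp\in R[\lambda]$ for all $k=1,\dots,m$ if and only if $a_j=0$ for all odd $j$ with $1\le j\le 2m-1$. *)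

(* Defs.v *)
From HB Require Import structures.
From mathcomp Require Import all_boot all_order all_algebra.
Set Implicit Arguments. Unset Strict Implicit. Unset Printing Implicit Defensive.
Import Order.TTheory GRing.Theory Num.Theory.
Local Open Scope ring_scope.

(* Laurent polynomials over R are represented by their coefficient
   function  f : int -> R  (f n = coefficient of lambda^n).  All operations
   below are defined coefficientwise, so they agree with the corresponding
   operations on R[lambda, lambda^-1] on finitely supported f. *)

Section Laurent.
Variables (C : numClosedFieldType) (R : comAlgType C).

Definition lpoly_of (p : {poly R}) : int -> R :=
  fun n => match n with Posz k => p`_k | Negz _ => 0 end.

Definition in_poly (f : int -> R) : Prop := forall n : int, n < 0 -> f n = 0.

(* the R-linear derivation with  d lambda = c :  d(lambda^n) = n c lambda^(n-1) *)
Definition lder (c : C) (f : int -> R) : int -> R :=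
  fun n => ((n + 1)%:~R * c) *: f (n + 1).

(* multiplication by lambda^(-m) *)
Definition lshift (m : nat) (f : int -> R) : int -> R :=
  fun n => f (n + (m%:Z)).

Definition Dcoef (k j : nat) : C :=
  ((k.-1 + j)`!)%:R / ((2 ^ j * (k.-1 - j)`! * j`!)%N)%:R.

Definition Dop (c : C) (k : nat) (f : int -> R) : int -> R :=
  fun n => ((-1) ^+ (k * k.+1)./2) *:
    \sum_(j < k) (Dcoef k j * (- c) ^+ j) *: lshift (k + j) (iter (k - j) (lder c) f) n.

End Laurent.

(* Main.v *)
Require Import Defs.
From Stdlib Require Import Arith Ring Lia.
From HB Require Import structures.
From mathcomp Require Import all_boot all_order all_algebra.
Set Implicit Arguments. Unset Strict Implicit. Unset Printing Implicit Defensive.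
Import Order.TTheory GRing.Theory Num.Theory.

Fixpoint e (K j : nat) : nat :=
  match K with
  | 0 => (j == 0)
  | K'.+1 => match j with 0 => 1 | j'.+1 => e K' j'.+1 + (K' + j').+1 * e K' j' end
  end.

Lemma e0 K : e K 0 = 1. Proof. by case: K. Qed.

Lemma e_gt K j : K < j -> e K j = 0.
Proof.
elim: K j => [|K IH] [|j] //= H.
rewrite ltnS in H. have H1 : K < j.+1 by apply: ltnW. by rewrite (IH j) // (IH j.+1) // muln0.
Qed.

Lemma e_fact K j : j <= K -> e K j * (2 ^ j * (K - j)`! * j`!) = (K + j)`!.
Proof.
elim: K j => [|K IH] [|j] //=.
- by move=> _; rewrite mul1n expn0 mul1n muln1 subn0 addn0.
- move=> hj; rewrite ltnS in hj; rewrite subSS addSn addnS !factS expnS.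
  have IH2 := IH j hj.
  case: (ltnP j K) => hjK.
  + have IH1 := IH j.+1 hjK.
    rewrite addnS factS in IH1.
    set d := K - j.+1 in IH1.
    have hK : K = j.+1 + d by rewrite subnKC.
    have hd : K - j = d.+1 by rewrite hK addSn subSn ?leq_addr // addKn.
    rewrite hd factS in IH2 *.
    rewrite factS expnS in IH1.
    move: IH1 IH2; set a := e K j.+1; set b := e K j; set u := 2 ^ j;
      set v := j`!; set w := d`!; set F := (K + j)`!.
    move=> IH1 IH2.
    transitivity (d.+1 * (a * (2 * u * w * (j.+1 * v))) + 2 * (K + j).+1 * j.+1 * (b * (u * (d.+1 * w) * v))).
      rewrite -!multE -!plusE; ring.
    rewrite IH1 IH2 hK -!multE -!plusE; ring.
  + have hjK' : j = K by apply/eqP; rewrite eqn_leq hjK andbT -ltnS.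
    subst j.
    rewrite subnn /= in IH2; rewrite subnn e_gt //.
    rewrite add0n.
    transitivity (2 * (K + K).+1 * K.+1 * (e K K * (2 ^ K * 0`! * K`!))).
      rewrite -!multE -!plusE; ring.
    rewrite IH2 -!multE -!plusE; ring.
Qed.
Local Open Scope ring_scope.

Section L.
Variables (C : numClosedFieldType) (R : comAlgType C) (c : C).

Definition ff (x : C) (i : nat) : C := \prod_(t < i) (x - t%:R).

Lemma ffS x i : ff x i.+1 = ff x i * (x - i%:R).
Proof. by rewrite /ff big_ord_recr. Qed.

Definition T K x := \sum_(j < K.+1) (e K j)%:R * (-1) ^+ j * ff x (K.+1 - j).

Lemma T_prod K x : T K x = \prod_(i < K.+1) (x - (2 * i)%N%:R).
Proof.
elim: K => [|K IH].
  by rewrite /T !big_ord1 /= /ff big_ord1 !mul1r.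
rewrite big_ord_recr /= -IH /T mulr_suml.
rewrite big_ord_recl /=.
under eq_bigr => j _ do rewrite /bump leq0n add1n add0n subSS /= natrD natrM !mulrDl.
rewrite subn0 expr0 !mul1r.
rewrite big_split /= addrA.
have H : \sum_(i < K.+2) (e K i)%:R * (-1) ^+ i * ff x (K.+2 - i) = ff x K.+2 + \sum_(i < K.+1) (e K i.+1)%:R * (-1) ^+ i.+1 * ff x (K.+1 - i).
  rewrite big_ord_recl subn0 expr0 e0 !mul1r; congr (_ + _).
have H2 : \sum_(i < K.+2) (e K i)%:R * (-1) ^+ i * ff x (K.+2 - i) = \sum_(i < K.+1) (e K i)%:R * (-1) ^+ i * ff x (K.+2 - i).
  by rewrite big_ord_recr /= e_gt // (_ : (0%N%:R : C) = 0) // !mul0r addr0.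
rewrite -H H2.
rewrite -big_split; apply: eq_bigr => j _.
have hj : (j <= K)%N by rewrite -ltnS.
have -> : (K.+2 - j)%N = (K.+1 - j)%N.+1 by rewrite (subSn (leqW hj)).
rewrite /= ffS exprS mulN1r.
have -> : x - (2 * K.+1)%N%:R = (x - (K.+1 - j)%N%:R) - (K + j).+1%:R.
  rewrite -addrA -opprD -natrD; congr (_ - _%:R).
  rewrite -!multE -!plusE -minusE. move/ssrnat.leP: hj. lia.
set y := x - _.
rewrite [_ * (y - _)]mulrBr -!mulrA; congr (_ + _).
by rewrite mulNr !mulrN !mulrA [in LHS](ACl (2*3*4*1)).
Qed.

Lemma Dcoef_e K j : (j <= K)%N -> Dcoef C K.+1 j = (e K j)%:R.
Proof.
move=> hj; rewrite /Dcoef /= -(e_fact hj) natrM mulfK // pnatr_eq0.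
by rewrite -lt0n !muln_gt0 expn_gt0 !fact_gt0.
Qed.

Lemma S_prod k x : (1 <= k)%N ->
  \sum_(j < k) Dcoef C k j * (-1) ^+ j * ff x (k - j) = \prod_(i < k) (x - (2 * i)%N%:R).
Proof.
case: k => [//|K] _; rewrite -T_prod; apply: eq_bigr => j _.
by rewrite Dcoef_e // -ltnS.
Qed.

Lemma iter_lder i (f : int -> R) (n : int) :
  iter i (lder c) f n = (ff (n + i%:Z)%:~R i * c ^+ i) *: f (n + i%:Z).
Proof.
elim: i f n => [|i IH] f n.
  by rewrite /= /ff big_ord0 mul1r expr0 scale1r addr0.
rewrite iterS /lder IH ffS scalerA.
have -> : n + 1 + i%:Z = n + i.+1%:Z by rewrite intS addrA.
congr (_ *: _).
have -> : (n + i.+1%:Z)%:~R - i%:R = (n + 1)%:~R :> C.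
  by rewrite intS addrA (intrD _ (n+1)) -[(i%:Z)%:~R]/(i%:R) addrK.

by rewrite exprS mulrACA (mulrC ((n+1)%:~R)). Qed.


Lemma Dop_eq k (f : int -> R) n : Dop c k f n =
  ((-1) ^+ (k * k.+1)./2 * c ^+ k *
   \sum_(j < k) Dcoef C k j * (-1) ^+ j * ff (n + (2 * k)%N%:Z)%:~R (k - j))
  *: f (n + (2 * k)%N%:Z).
Proof.
rewrite /Dop mulr_sumr scaler_suml scaler_sumr; apply: eq_bigr => j _.
have ljk : (j <= k)%N by apply: ltnW.
rewrite /Defs.lshift iter_lder.
have -> : n + (k + j)%N%:Z + (k - j)%N%:Z = n + (2 * k)%N%:Z.
  by rewrite -addrA -PoszD addnAC -addnA subnK // addnn -mul2n.
rewrite !scalerA; congr (_ *: _).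
have -> : c ^+ k = c ^+ j * c ^+ (k - j) by rewrite -exprD subnKC.
set D := Dcoef C k j; set F := ff _ _; by rewrite (exprNn c) !mulrA [LHS](ACl (1*5*7*2*3*4*6)). Qed.



Lemma key (hc : c != 0) (p : {poly R}) k : (1 <= k)%N ->
  in_poly (Dop c k (lpoly_of p)) <-> (forall a : nat, (a < 2 * k)%N -> odd a -> p`_a = 0).
Proof.
move=> hk; split.
- move=> H a ha oa.
  have hn : a%:Z - (2 * k)%N%:Z < 0 by rewrite subr_lt0 ltz_nat.
  have := H _ hn; rewrite Dop_eq subrK S_prod //= -[(a%:Z)%:~R]/(a%:R : C).
  set al := (_ * _ * _); move=> h0.
  have al0 : al != 0.
    rewrite !mulf_neq0 ?signr_eq0 ?expf_neq0 //.
    apply/prodf_neq0 => i _; rewrite subr_eq0 eqr_nat; apply/negP => /eqP hai.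
    by move: oa; rewrite hai oddM.
  by rewrite -(scalerK al0 p`_a) h0 scaler0.
- move=> H n hn; rewrite Dop_eq S_prod //.
  case E: (n + (2 * k)%N%:Z) => [a|a]; last by rewrite /= scaler0.
  rewrite /= -[(a%:Z)%:~R]/(a%:R : C).
  have ha : (a < 2 * k)%N.
    by rewrite -ltz_nat -E gtrDr.
  case oa: (odd a); first by rewrite H // scaler0.
  suff -> : \prod_(i < k) ((a%:R : C) - (2 * i)%N%:R) = 0 by rewrite !mulr0 scale0r.
  apply/eqP/prodf_eq0.
  have hk2 : (a./2 < k)%N by rewrite ltn_half_double -mul2n.
  exists (Ordinal hk2) => //=.
  by rewrite subr_eq0 eqr_nat mul2n even_halfK ?oa.
Qed.
End L.

Theorem mainTheorem9 (C : numClosedFieldType) (R : comAlgType C) (c : C)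
  (hc : c != 0) (m : nat) (hm : (1 <= m)%N) (p : {poly R}) :
  (forall k : nat, (1 <= k <= m)%N -> in_poly (Dop c k (lpoly_of p))) <->
  (forall j : nat, odd j -> (1 <= j <= 2 * m - 1)%N -> p`_j = 0).
Proof.
split.
- move=> H j oj /andP [h1 h2].
  have Hm := (key hc p hm).1 (H m ltac:(by rewrite hm leqnn)).
  apply: Hm oj.
  move/ssrnat.leP: h2; move/ssrnat.leP: hm => hm' h2'.
  apply/ssrnat.ltP; rewrite -multE -minusE in h2' *. lia.
- move=> H k /andP [hk1 hk2]; apply/(key hc p hk1) => a ha oa.
  apply: H => //; apply/andP; split.
    by case: a oa {ha}.
  move/ssrnat.leP: hk2; move/ssrnat.ltP: ha => ha' hk'.
  apply/ssrnat.leP; rewrite -multE -minusE in ha' *. lia.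
Qed.
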